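(* Let $\mathcal P$ be a Poisson algebra over $\mathbb R$ (a commutative associative unital $\mathbb R$-algebra with an antisymmetric bilinear bracket $\{\cdot,\cdot\}_p$ satisfying the Jacobi identity and the Leibniz rule $\{X,YZ\}_p=\{X,Y\}_pZ+\{X,Z\}_pY$) which is an integral domain. Fix an integer $M\ge 1$ and put $L=\lfloor M/2\rfloor$. Let $A,B\in\mathcal P$ be algebraically independent over $\mathbb R$ (no nonzero real polynomial $P(x,y)$ satisfies $P(A,B)=0$), put $C=\{A,B\}_p$ and assume $C\neq 0$. Suppose there are real constants $\alpha_1,\dots,\alpha_{L+1},\delta,\epsilon,\beta,\lambda_1,\dots,\lambda_M,\rho,\eta,\omega_1,\dots,\omega_L,\zeta$ with $$\{A,C\}_p=\sum_{i=1}^{L+1}\alpha_iA^i+\delta B+\epsilon+2\beta AB,\qquad \{B,C\}_p=\sum_{i=1}^{M}\lambda_iA^i+\rho B^2+\eta B+\sum_{i=1}^{L}2\omega_iA^iB+\zeta .$$ Then $\eta=-\alpha_1$, $\rho=-\beta$ and $2\omega_i=-(i+1)\alpha_{i+1}$ for $i=1,\dots,L$. Consequently $$\{B,C\}_p=\sum_{i=1}^{M}\lambda_iA^i-\beta B^2-\alpha_1B-\sum_{i=1}^{L}(i+1)\alpha_{i+1}A^iB+\zeta .$$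
   Context: $\lfloor y\rfloor$ denotes the integer part of $y$, so $\lfloor M/2+1\rfloor=L+1$. A typical example of such $\mathcal P$ is the polynomial algebra $\mathbb R[q_1,q_2,p_1,p_2]$ with the canonical bracket $\{X,Y\}_p=\sum_{i=1}^2\left(\frac{\partial X}{\partial q_i}\frac{\partial Y}{\partial p_i}-\frac{\partial X}{\partial p_i}\frac{\partial Y}{\partial q_i}\right)$, with $A$ of degree 2 and $B$ of degree $M$ in the momenta. *)

(* Defs.v *)
From HB Require Import structures.
From Stdlib Require Import Reals ClassicalEpsilon.
From mathcomp Require Import all_boot all_order all_algebra.
Set Implicit Arguments. Unset Strict Implicit. Unset Printing Implicit Defensive.
Import GRing.Theory.

Definition R_eqb (x y : R) : bool := if Req_EM_T x y then true else false.
Lemma R_eqP : Equality.axiom R_eqb.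
Proof. by move=> x y; rewrite /R_eqb; case: Req_EM_T => h; constructor. Qed.
HB.instance Definition _ := hasDecEq.Build R R_eqP.

Definition R_find (P : pred R) (n : nat) : option R :=
  match excluded_middle_informative (exists x, P x) with
  | left h => Some (proj1_sig (constructive_indefinite_description _ h))
  | right _ => None
  end.
Lemma R_find_correct P n x : R_find P n = Some x -> P x.
Proof.
rewrite /R_find; case: excluded_middle_informative => // h [<-].
exact: proj2_sig (constructive_indefinite_description _ h).
Qed.
Lemma R_find_complete (P : pred R) : (exists x, P x) -> exists n, R_find P n.
Proof. by move=> h; exists 0%N; rewrite /R_find; case: excluded_middle_informative. Qed.
Lemma R_find_ext (P Q : pred R) : P =1 Q -> R_find P =1 R_find Q.
Proof.
move=> /(_ _)/eqP hPQ; have -> : P = Q.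
  by apply: FunctionalExtensionality.functional_extensionality => x; apply/eqP.
by [].
Qed.
HB.instance Definition _ := hasChoice.Build R R_find_correct R_find_complete R_find_ext.

Lemma R_addA : associative Rplus. Proof. by move=> *; rewrite Rplus_assoc. Qed.
Lemma R_addC : commutative Rplus. Proof. exact: Rplus_comm. Qed.
Lemma R_add0 : left_id R0 Rplus. Proof. exact: Rplus_0_l. Qed.
Lemma R_addN : left_inverse R0 Ropp Rplus. Proof. exact: Rplus_opp_l. Qed.
HB.instance Definition _ := GRing.isZmodule.Build R R_addA R_addC R_add0 R_addN.

Lemma R_mulA : associative Rmult. Proof. by move=> *; rewrite Rmult_assoc. Qed.
Lemma R_mulC : commutative Rmult. Proof. exact: Rmult_comm. Qed.
Lemma R_mul1 : left_id R1 Rmult. Proof. exact: Rmult_1_l. Qed.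
Lemma R_mulDl : left_distributive Rmult Rplus. Proof. exact: Rmult_plus_distr_r. Qed.
Lemma R_one_neq0 : R1 != R0. Proof. by apply/eqP; exact: R1_neq_R0. Qed.
HB.instance Definition _ :=
  GRing.Zmodule_isComNzRing.Build R R_mulA R_mulC R_mul1 R_mulDl R_one_neq0.

Local Open Scope ring_scope.

Definition is_poisson_bracket (P : comAlgType R) (br : P -> P -> P) : Prop :=
  [/\ (forall (a : R) (x y z : P), br (a *: x + y) z = a *: br x z + br y z),
      (forall (a : R) (x y z : P), br x (a *: y + z) = a *: br x y + br x z),
      (forall x y : P, br x y = - br y x),
      (forall x y z : P, br x (br y z) + br y (br z x) + br z (br x y) = 0)
    & (forall x y z : P, br x (y * z) = br x y * z + br x z * y)].

(* P is an integral domain (P is nontrivial since comAlgType requires 1 != 0). *)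
Definition is_integral_domain (P : comAlgType R) : Prop :=
  forall x y : P, x * y = 0 -> x = 0 \/ y = 0.

Definition alg_indep (P : comAlgType R) (A B : P) : Prop :=
  forall (n : nat) (c : nat -> nat -> R),
    \sum_(i < n) \sum_(j < n) c i j *: (A ^+ i * B ^+ j) = 0 ->
    forall i j, (i < n)%N -> (j < n)%N -> c i j = 0.

(* Main.v *)
Require Import Defs.
From HB Require Import structures.
From Stdlib Require Import Reals Lra.
From mathcomp Require Import all_boot all_order all_algebra.
From mathcomp Require Import ring.
Import GRing.Theory.

Local Open Scope ring_scope.
Lemma half_half : (Rinv 2 + Rinv 2 : R) = 1.
Proof. change (Rplus (Rinv 2) (Rinv 2) = R1). lra. Qed.
Lemma rho_l (x y : R) : 2 * x + 2 * y = 0 -> x = - y.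
Proof. change (Rplus (Rmult 2 x) (Rmult 2 y) = R0 -> x = Ropp y). lra. Qed.

Section Br.
Set Implicit Arguments.
Variables (P : comAlgType R) (br : P -> P -> P) (Hbr : is_poisson_bracket br).

Lemma br2D x y z : br x (y + z) = br x y + br x z.
Proof. case: Hbr => _ H _ _ _. by have := H 1 x y z; rewrite !scale1r. Qed.
Lemma br20 x : br x 0 = 0.
Proof. have h := br2D x 0 0; rewrite addr0 in h. by apply: (addIr (br x 0)); rewrite add0r -h. Qed.
Lemma br2Z a x y : br x (a *: y) = a *: br x y.
Proof. case: Hbr => _ H _ _ _. by have := H a x y 0; rewrite !addr0 br20 addr0. Qed.
Lemma br2N x y : br x (- y) = - br x y.
Proof. by rewrite -scaleN1r br2Z scaleN1r. Qed.
Lemma br2sum x I (r : seq I) (Pr : pred I) (F : I -> P) :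
  br x (\sum_(i <- r | Pr i) F i) = \sum_(i <- r | Pr i) br x (F i).
Proof. exact: (big_morph _ (br2D x) (br20 x)). Qed.
Lemma br2M x y z : br x (y * z) = br x y * z + br x z * y.
Proof. by case: Hbr. Qed.
Lemma brAS x y : br x y = - br y x.
Proof. by case: Hbr. Qed.
Lemma brxx x : br x x = 0.
Proof.
have h : br x x + br x x = 0 by rewrite {1}brAS addNr.
rewrite -[br x x]scale1r -half_half scalerDl -scalerDr h scaler0 //.
Qed.
Lemma br21 x : br x 1 = 0.
Proof.
have h := br2M x 1 1; rewrite !mulr1 in h.
by apply: (addIr (br x 1)); rewrite add0r -h.
Qed.
Lemma br2C x a : br x (a%:A) = 0.
Proof. by rewrite br2Z br21 scaler0. Qed.
Lemma brpow x n : br x (x ^+ n) = 0.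
Proof.
elim: n => [|n IH]; first by rewrite expr0 br21.
by rewrite exprSr br2M IH brxx !mul0r addr0.
Qed.
Lemma brBpow A B n : br B (A ^+ n.+1) = - ((A ^+ n * br A B) *+ n.+1).
Proof.
elim: n => [|n IH]; first by rewrite expr1 expr0 mul1r brAS.
rewrite exprSr br2M IH (brAS B A).
rewrite exprS; ring.
Qed.
End Br.
Unset Implicit Arguments.
Theorem proposition1 (P : comAlgType R) (br : P -> P -> P)
  (Hbr : is_poisson_bracket br) (Hdom : is_integral_domain P)
  (M : nat) (HM : (1 <= M)%N)
  (A B : P) (Hind : alg_indep A B) (HC : br A B != 0)
  (alpha lambda omega : nat -> R) (delta eps beta rho eta zeta : R)
  (HAC : br A (br A B) =
         \sum_(1 <= i < (M./2).+2) alpha i *: A ^+ i + delta *: B + eps%:A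
         + (2 * beta) *: (A * B))
  (HBC : br B (br A B) =
         \sum_(1 <= i < M.+1) lambda i *: A ^+ i + rho *: B ^+ 2 + eta *: B
         + \sum_(1 <= i < (M./2).+1) (2 * omega i) *: (A ^+ i * B) + zeta%:A) :
  [/\ eta = - alpha 1%N,
      rho = - beta,
      (forall i : nat, (1 <= i <= M./2)%N -> 2 * omega i = - (i.+1%:R * alpha i.+1))
    & br B (br A B) =
        \sum_(1 <= i < M.+1) lambda i *: A ^+ i - beta *: B ^+ 2 - alpha 1%N *: B
        - \sum_(1 <= i < (M./2).+1) (i.+1%:R * alpha i.+1) *: (A ^+ i * B) + zeta%:A].
Proof.
set L := M./2.
set C := br A B.
have J : br A (br B C) = br B (br A C).
  have [_ _ _ Jac _] := Hbr.
  have := Jac A B C; rewrite (brAS Hbr C A) (br2N Hbr) -/C (brxx Hbr C) addr0.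
  by move/eqP; rewrite subr_eq0 => /eqP.
have LHS : br A (br B C) = (2 * rho) *: (C * B) + eta *: C
    + \sum_(1 <= i < L.+1) (2 * omega i) *: (C * A ^+ i).
  rewrite HBC !(br2D Hbr) !(br2sum Hbr) (br2C Hbr) addr0 big1; last first.
    by move=> i _; rewrite (br2Z Hbr) (brpow Hbr) scaler0.
  rewrite add0r !(br2Z Hbr) expr2 (br2M Hbr) -/C.
  congr (_ + _ + _).
    by rewrite [2 * rho]mulrC -scalerA scaler_nat mulr2n.
  by apply: eq_bigr => i _; rewrite (br2Z Hbr) (br2M Hbr) (brpow Hbr) mul0r add0r.
have RHS : br B (br A C) = - (alpha 1%N *: C)
    - \sum_(1 <= i < L.+1) (i.+1%:R * alpha i.+1) *: (C * A ^+ i)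
    - (2 * beta) *: (C * B).
  rewrite /C HAC -/C !(br2D Hbr) (br2C Hbr) addr0 (br2Z Hbr) (brxx Hbr) scaler0 addr0.
  rewrite (br2Z Hbr) (br2M Hbr) (brxx Hbr) mul0r addr0 (brAS Hbr B A) -/C.
  rewrite (br2sum Hbr) big_add1 /= big_nat_recl // big_add1 /=.
  rewrite (br2Z Hbr) (brBpow Hbr) -/C expr0 mul1r mulr1n.
  rewrite scalerN mulNr scalerN -sumrN.
  congr (_ + _ + _).
  apply: eq_bigr => i _.
  by rewrite (br2Z Hbr) (brBpow Hbr) -/C scalerN -scaler_nat scalerA mulrC [A ^+ i.+1 * C]mulrC.
set Q := (eta + alpha 1%N)%:A + (2 * rho + 2 * beta) *: B
  + \sum_(1 <= i < L.+1) (2 * omega i + i.+1%:R * alpha i.+1) *: A ^+ i.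
have HQ : C * Q = 0.
  have h : br A (br B C) - br B (br A C) = 0 by rewrite J subrr.
  rewrite LHS RHS in h; rewrite -h /Q.
  rewrite !mulrDr mulr_algr -scalerAr mulr_sumr.
  under eq_bigr => i _ do rewrite -scalerAr scalerDl.
  rewrite !scalerDl big_split /=.
  ring.
have Q0 : Q = 0.
  by case: (Hdom _ _ HQ) => // h; move: HC; rewrite -/C h eqxx.
pose c (i j : nat) : R := if j == 0%N then
    (if i == 0%N then eta + alpha 1%N
     else if (i <= L)%N then 2 * omega i + i.+1%:R * alpha i.+1 else 0)
  else if (j == 1%N) && (i == 0%N) then 2 * rho + 2 * beta else 0.
have inner : forall i : nat, \sum_(j < L.+2) c i j *: (A ^+ i * B ^+ j)
    = c i 0%N *: A ^+ i + c i 1%N *: (A ^+ i * B).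
  move=> i; rewrite big_ord_recl big_ord_recl big1 ?addr0 /=.
    by rewrite expr0 mulr1 expr1.
  by move=> j _; rewrite /c /= scale0r.
have dsum : \sum_(i < L.+2) \sum_(j < L.+2) c i j *: (A ^+ i * B ^+ j) = Q.
  under eq_bigr => i _ do rewrite inner.
  rewrite big_split /=.
  have -> : \sum_(i < L.+2) c i 1%N *: (A ^+ i * B) = (2 * rho + 2 * beta) *: B.
    rewrite big_ord_recl big1 /= ?expr0 ?mul1r ?addr0 //.
    by move=> i _; rewrite /c /= scale0r.
  rewrite big_ord_recl big_ord_recr /= /bump !leq0n !add1n.
  have -> : c L.+1 0%N = 0 by rewrite /c /= ltnn.
  rewrite scale0r addr0 expr0 -addrA [X in _ + X = _]addrC addrA /Q.
  congr (_ + _ + _).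
  rewrite big_add1 /= big_mkord; apply: eq_bigr => i _.
  by rewrite add1n /c /= ltn_ord.
have Hc := Hind L.+2 c (etrans dsum Q0).
have Heta : eta = - alpha 1%N.
  have := Hc 0%N 0%N isT isT; rewrite /c /= => h.
  by apply/eqP; rewrite -addr_eq0 h.
have Hrho : rho = - beta.
  have := Hc 0%N 1%N isT isT; rewrite /c /= => h.
  exact: rho_l.
have Hom : forall i : nat, (1 <= i <= L)%N -> 2 * omega i = - (i.+1%:R * alpha i.+1).
  move=> i /andP [h1 h2].
  have hi : (i < L.+2)%N by rewrite ltnS (leq_trans h2 (leqnSn _)).
  have := Hc i 0%N hi isT.
  rewrite /c /= h2 (negbTE (lt0n_neq0 h1)) => h.
  by apply/eqP; rewrite -addr_eq0 h.
split => //.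
rewrite HBC Heta Hrho.
under [\sum_(1 <= i < L.+1) _]eq_big_nat => i hi do rewrite (Hom i hi) scaleNr.
by rewrite sumrN !scaleNr.
Qed.
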